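(* Let $\Gamma$ be a finite connected $(G,2)$-geodesic-transitive graph of girth at least $4$, with $G\le\mathrm{Aut}(\Gamma)$. Let $N$ be an intransitive normal subgroup of $G$ with at least $3$ orbits on $V(\Gamma)$. Then $\Gamma_N$ is a complete graph if and only if $\Gamma_N$ has girth $3$.
   Context: A $2$-geodesic is a path $(v_0,v_1,v_2)$ with $d(v_0,v_2)=2$; $\Gamma$ is $(G,2)$-geodesic-transitive if it has a $2$-geodesic and $G$ is transitive on vertices, on arcs and on $2$-geodesics. $\Gamma_N$ is the graph whose vertices are the $N$-orbits on $V(\Gamma)$, two distinct orbits being adjacent iff some edge of $\Gamma$ joins them. *)

(* Defs.v *)
From mathcomp Require Import all_boot all_fingroup.
Set Implicit Arguments. Unset Strict Implicit. Unset Printing Implicit Defensive.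
Local Open Scope group_scope.

Section Graphs.
Variable T : finType.

(* A simple graph on the vertex set A : {set T} with adjacency e
   (e is assumed symmetric and irreflexive where relevant). *)

Definition has_cycle_len (A : {set T}) (e : rel T) (k : nat) : Prop :=
  exists s : seq T, [/\ uniq s, size s = k, 3 <= k, all (mem A) s & path.cycle e s].

(* girth (length of a shortest cycle) is at least m; vacuous for acyclic graphs *)
Definition girth_ge (A : {set T}) (e : rel T) (m : nat) : Prop :=
  forall k, has_cycle_len A e k -> m <= k.

Definition girth_eq (A : {set T}) (e : rel T) (m : nat) : Prop :=
  has_cycle_len A e m /\ girth_ge A e m.

Definition complete_graph (A : {set T}) (e : rel T) : Prop :=
  forall x y, x \in A -> y \in A -> x != y -> e x y.

Definition two_geodesic (e : rel T) (v0 v1 v2 : T) : bool :=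
  [&& e v0 v1, e v1 v2, v0 != v2 & ~~ e v0 v2].

Definition is_aut_group (e : rel T) (G : {group {perm T}}) : Prop :=
  forall g, g \in G -> forall x y, e (g x) (g y) = e x y.

Definition G2_geodesic_transitive (e : rel T) (G : {group {perm T}}) : Prop :=
  [/\ (exists v0 v1 v2, two_geodesic e v0 v1 v2),
      (forall x y, exists2 g, g \in G & g x = y),
      (forall x y x' y', e x y -> e x' y' ->
          exists2 g, g \in G & (g x = x' /\ g y = y')) &
      (forall u0 u1 u2 w0 w1 w2, two_geodesic e u0 u1 u2 -> two_geodesic e w0 w1 w2 ->
          exists2 g, g \in G & [/\ g u0 = w0, g u1 = w1 & g u2 = w2])].

Definition orbits_of (N : {group {perm T}}) : {set {set T}} :=
  [set orbit 'P N x | x : T].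

Definition quot_adj (e : rel T) : rel {set T} :=
  fun B C => (B != C) && [exists x in B, exists y in C, e x y].

End Graphs.

(* Main.v *)
Require Import Defs.
From mathcomp Require Import all_boot all_fingroup.
Local Open Scope group_scope.

Section Aux.
Variables (T : finType) (e : rel T) (G N : {group {perm T}}).
Hypothesis esym : symmetric e.
Hypothesis eirr : irreflexive e.
Hypothesis autG : is_aut_group e G.
Hypothesis nNG : N <| G.

Local Notation O x := (orbit 'P N x).

Lemma inO x y : (y \in O x) <-> exists2 n, n \in N & n x = y.
Proof. by split => [/orbitP|h]; last apply/orbitP. Qed.

Lemma O_eq x y : y \in O x -> O y = O x.
Proof. by move=> h; apply/orbit_eqP. Qed.

Lemma O_self x : x \in O x.
Proof. exact: orbit_refl. Qed.

Lemma qsym : symmetric (quot_adj e).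
Proof.
move=> B C; rewrite /quot_adj eq_sym; congr (_ && _).
apply/existsP/existsP => -[x /andP[xB /existsP[y /andP[yC exy]]]];
 exists y; rewrite yC /=; apply/existsP; exists x; by rewrite xB esym.
Qed.

Lemma g_orbit g u x : g \in G -> u \in O x -> g u \in O (g x).
Proof.
move=> gG /orbitP[n nN <-]; apply/orbitP; exists (n ^ g).
  by rewrite memJ_norm // (subsetP (normal_norm nNG)).
by rewrite /= /conjg !apermE !permM permK.
Qed.

Lemma transport b b' d : b' \in O b -> e b' d -> exists2 d', O d' = O d & e b d'.
Proof.
move=> /orbitP[n nN <-] ed; exists (n^-1 d).
  apply: O_eq; apply/orbitP; exists n^-1; by rewrite ?groupV.
have nG : n \in G by rewrite (subsetP (normal_sub nNG)).
by rewrite -(autG _ nG) permKV.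
Qed.

Lemma key_geo a0 a1 a2 :
  two_geodesic e a0 a1 a2 -> quot_adj e (O a0) (O a2) ->
  G2_geodesic_transitive e G ->
  forall c b d, two_geodesic e c b d -> O c != O d -> quot_adj e (O c) (O d).
Proof.
move=> ga qa [_ _ _ H] c b d gc ne.
have [g gG [g0 g1 g2]] := H _ _ _ _ _ _ ga gc.
move: qa => /andP[_ /existsP[u /andP[uB /existsP[w /andP[wC euw]]]]].
rewrite /quot_adj ne /=; apply/existsP; exists (g u).
rewrite -g0 g_orbit //=; apply/existsP; exists (g w).
by rewrite -g2 g_orbit //= autG.
Qed.

Lemma key a0 a1 a2 :
  two_geodesic e a0 a1 a2 -> quot_adj e (O a0) (O a2) ->
  G2_geodesic_transitive e G ->
  forall b c b' d, e b c -> b' \in O b -> e b' d -> O c != O d ->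
  quot_adj e (O c) (O d).
Proof.
move=> ga qa H b c b' d ebc bb ebd ne.
have [d' Od' ebd'] := transport _ _ _ bb ebd.
rewrite -Od' in ne *.
have cd : c != d' by apply: contraNneq ne => ->.
case ecd: (e c d').
  rewrite /quot_adj ne /=; apply/existsP; exists c; rewrite O_self /=.
  by apply/existsP; exists d'; rewrite O_self.
apply: (key_geo _ _ _ ga qa H c b d' _ ne).
by rewrite /two_geodesic esym ebc ebd' cd ecd.
Qed.

End Aux.

Theorem lemma3p3 (T : finType) (e : rel T) (G N : {group {perm T}}) :
  symmetric e -> irreflexive e ->
  (forall x y, connect e x y) ->
  is_aut_group e G ->
  G2_geodesic_transitive e G ->
  girth_ge [set: T] e 4 ->
  N <| G ->
  3 <= #|orbits_of N| ->
  complete_graph (orbits_of N) (quot_adj e) <->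
  girth_eq (orbits_of N) (quot_adj e) 3.
Proof.
move=> esym eirr conn autG H girth nNG card3.
have gge3 : girth_ge (orbits_of N) (quot_adj e) 3 by move=> k [s [_ _ h _ _]].
split.
  move=> comp; split => //.
  move: card3; rewrite cardE.
  have := enum_uniq (mem (orbits_of N)).
  have memE := mem_enum (mem (orbits_of N)).
  case: (enum _) memE => [|a [|b [|c r]]] //= memE.
  rewrite !inE !negb_or => /and4P[/and3P[ab ac _] /andP[bc _] _ _] _.
  have ha : a \in orbits_of N by rewrite -memE inE eqxx.
  have hb : b \in orbits_of N by rewrite -memE !inE eqxx orbT.
  have hc : c \in orbits_of N by rewrite -memE !inE eqxx !orbT.
  exists [:: a; b; c]; split => //=.
  - by rewrite !inE negb_or ab ac bc.
  - by rewrite ha hb hc.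
  - by rewrite !comp // eq_sym.
move=> [[s [us ss _ als cs]] _].
case: s us ss als cs => [|B1 [|B2 [|B3 [|? ?]]]] //= us _.
rewrite !andbT => /and3P[h1 h2 h3] /and3P[q12 q23 q31].
move: us; rewrite !inE !negb_or andbT => /andP[/andP[n12 n13] n23].
move: q12 q31; rewrite /quot_adj => /andP[_ /existsP[x /andP[xB1 /existsP[y /andP[yB2 exy]]]]].
move=> /andP[_ /existsP[z /andP[zB3 /existsP[x' /andP[x'B1 ezx]]]]].
have [y0 _ eB2] := imsetP h2.
have [z0 _ eB3] := imsetP h3.
have Oeq := @O_eq T N.
have [x1 _ eB1] := imsetP h1.
have Ox : orbit 'P N x = B1 by rewrite eB1; apply: Oeq; rewrite -eB1.
have Ox' : orbit 'P N x' = B1 by rewrite eB1; apply: Oeq; rewrite -eB1.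
have x'x : x' \in orbit 'P N x by rewrite Ox -Ox' orbit_refl.
rewrite esym in ezx.
have [z' Oz' exz'] := @transport T e G N autG nNG _ _ _ x'x ezx.
have Oy : orbit 'P N y = B2 by rewrite eB2; apply: O_eq; rewrite -eB2.
have Oz : orbit 'P N z = B3 by rewrite eB3; apply: O_eq; rewrite -eB3.
have yz : y != z'.
  by apply: contraNneq n23 => yz; rewrite -Oy -Oz -Oz' yz.
have geo : two_geodesic e y x z'.
  rewrite /two_geodesic esym exy exz' /= yz /=; apply/negP => eyz.
  have : 4 <= 3; last by [].
  apply: girth; exists [:: x; y; z']; split => //=.
  - have xy : x != y by apply/eqP => hxy; move: exy; rewrite hxy eirr.
    have xz : x != z' by apply/eqP => hxz; move: exz'; rewrite hxz eirr.
    by rewrite !inE !negb_or xy xz yz.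
  - by rewrite !in_setT.
  - by rewrite exy eyz esym exz'.
have qg : quot_adj e (orbit 'P N y) (orbit 'P N z') by rewrite Oz' Oz Oy.
move=> X Y /imsetP[x0 _ ->] /imsetP[w0 _ ->] nXY.
have P : forall p u, (orbit 'P N u = orbit 'P N x0 \/ quot_adj e (orbit 'P N x0) (orbit 'P N u)) ->
    path e u p ->
    (orbit 'P N (last u p) = orbit 'P N x0 \/ quot_adj e (orbit 'P N x0) (orbit 'P N (last u p))).
  elim=> [|w p IH] u Pu //= /andP[euw pp]; apply: IH pp.
  case: (eqVneq (orbit 'P N w) (orbit 'P N x0)) => [->|nw]; [by left | right].
  case: Pu => [Ou|qu].
    rewrite /quot_adj eq_sym nw /=; apply/existsP; exists u; rewrite -Ou orbit_refl /=.
    by apply/existsP; exists w; rewrite orbit_refl euw.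
  case: (eqVneq (orbit 'P N w) (orbit 'P N u)) => [->//|nwu].
  move: (qu) => /andP[_ /existsP[a /andP[ha /existsP[b' /andP[hb' eab]]]]].
  have Oa := Oeq _ _ ha.
  have hb'' : b' \in orbit 'P N u by [].
  rewrite orbit_sym in hb''.
  rewrite qsym //.
  rewrite -Oa; apply: (@key T e G N esym autG nNG _ _ _ geo qg H u w b' a euw) => //.
  - by rewrite esym.
  - by rewrite Oa.
have [p pp eqw] := connectP (conn x0 w0).
rewrite eqw in nXY *.
case: (P p x0 (or_introl erefl) pp) => [eq|//].
by rewrite eq eqxx in nXY.
Qed.
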